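(* Let $\langle\vec l,\vec c\rangle$ be a ladder system coloring and $E\subseteq\omega_1$ a stationary and co-stationary set. Then $\mathbb{P}_E(\vec l,\vec c)$ is $\mathsf{stat}_{\omega_1\setminus E}$-pc.
   Context: A ladder system is $\vec l=\langle l_\alpha:\alpha\in\omega_1\cap\mathrm{Lim}\rangle$ with each $l_\alpha\subseteq\alpha$ cofinal in $\alpha$ of order type $\omega$; $l_{\alpha,n}$ is the $n$-th element of $l_\alpha$ and $l_\alpha^n=\{l_{\alpha,m}:m\ge n\}$. A ladder system coloring is $\langle\vec l,\vec c\rangle$ with $\vec c=\langle c_\alpha:l_\alpha\to\omega\rangle$. $\mathbb{P}_E(\vec l,\vec c)$ is the set of finite partial functions $p$ from $E\cap\mathrm{Lim}$ to $\omega$ such that $\bigcup_{\alpha\in\mathrm{dom}(p)}c_\alpha\restriction l_\alpha^{p(\alpha)}$ is a function, ordered by $q\le p$ iff $q\supseteq p$. For $X\subseteq\omega_1$, $\mathsf{stat}_X$ is the family of stationary subsets of $\omega_1$ contained in $X$; a poset is $\mathsf{stat}_X$-pc if for every $S\in\mathsf{stat}_X$ and every $\langle p_\alpha:\alpha\in S\rangle$ there is $S'\in\mathsf{stat}_S$ with $\{p_\alpha:\alpha\in S'\}$ centered (every finite subset has a common lower bound). *)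

(* Defs.v *)
From Stdlib Require Import List.



(** omega_1, characterized up to isomorphism: a strict well-order that is
    total, uncountable, and all of whose proper initial segments are countable. *)
Record Omega1 : Type := {
  o1 :> Type;
  olt : o1 -> o1 -> Prop;
  olt_irrefl : forall x, ~ olt x x;
  olt_trans : forall x y z, olt x y -> olt y z -> olt x z;
  olt_total : forall x y, olt x y \/ x = y \/ olt y x;
  olt_wf : well_founded olt;
  o1_uncountable : ~ exists f : o1 -> nat, forall x y, f x = f y -> x = y;
  o1_segments_countable : forall a : o1,
    exists f : {y : o1 | olt y a} -> nat, forall x y, f x = f y -> x = y
}.

Section Defs.
Variable W : Omega1.
Notation "x < y" := (olt W x y).

Definition is_limit (a : W) : Prop :=
  (exists b, b < a) /\ forall b, b < a -> exists c, b < c /\ c < a.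

Definition unbounded (C : W -> Prop) : Prop :=
  forall a, exists b, a < b /\ C b.

Definition closed (C : W -> Prop) : Prop :=
  forall a, is_limit a ->
    (forall b, b < a -> exists c, b < c /\ c < a /\ C c) -> C a.

Definition club (C : W -> Prop) : Prop := closed C /\ unbounded C.

Definition stationary (S : W -> Prop) : Prop :=
  forall C, club C -> exists a, C a /\ S a.

Definition stat (X : W -> Prop) (S : W -> Prop) : Prop :=
  stationary S /\ forall a, S a -> X a.

(** ladder system: l a n = l_{a,n}, the n-th element of l_a; l_a is a
    subset of a of order type omega cofinal in a, i.e. the range of a
    strictly increasing sequence below a, cofinal in a. *)
Definition ladder_system (l : W -> nat -> W) : Prop :=
  forall a, is_limit a ->
    (forall n, l a n < a) /\
    (forall n m, (n < m)%nat -> l a n < l a m) /\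
    (forall b, b < a -> exists n, b < l a n).

(** A coloring c_a : l_a -> omega is represented by c a n = c_a(l_{a,n}). *)

(** Conditions: finite partial functions W -> nat (None = undefined). *)
Definition cond := W -> option nat.

Definition finite_dom (p : cond) : Prop :=
  exists s : list W, forall a, p a <> None -> In a s.

Definition in_PE (E : W -> Prop) (l : W -> nat -> W) (c : W -> nat -> nat)
    (p : cond) : Prop :=
  finite_dom p /\
  (forall a k, p a = Some k -> E a /\ is_limit a) /\
  (* the union of c_a restricted to l_a^{p(a)} is a function *)
  (forall a b ka kb m n, p a = Some ka -> p b = Some kb ->
     (ka <= m)%nat -> (kb <= n)%nat -> l a m = l b n -> c a m = c b n).

(** q <= p iff q extends p *)
Definition ext (q p : cond) : Prop := forall a k, p a = Some k -> q a = Some k.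

Definition centered (E : W -> Prop) (l : W -> nat -> W) (c : W -> nat -> nat)
    (F : cond -> Prop) : Prop :=
  forall s : list cond, (forall p, In p s -> F p) ->
    exists q, in_PE E l c q /\ forall p, In p s -> ext q p.

Definition stat_pc (X : W -> Prop) (E : W -> Prop) (l : W -> nat -> W)
    (c : W -> nat -> nat) : Prop :=
  forall (S : W -> Prop) (ps : W -> cond),
    stat X S -> (forall a, S a -> in_PE E l c (ps a)) ->
    exists S', stat S S' /\ centered E l c (fun q => exists a, S' a /\ q = ps a).

End Defs.

(* Main.v *)
Require Import Defs.
From Stdlib Require Import List Classical ClassicalEpsilon Arith Lia Cantor.

Local Notation "x <w y" := (olt _ x y) (at level 70).

Lemma wf_min (W : Omega1) (P : W -> Prop) :
  (exists x, P x) -> exists m, P m /\ forall y, y <w m -> ~ P y.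
Proof.
  intros [x Hx]. apply NNPP; intro H.
  assert (forall z, ~ P z) as Hz.
  { intro z. induction z as [z IH] using (well_founded_ind (olt_wf W)).
    intro Pz. apply H. exists z. split; auto. }
  exact (Hz x Hx).
Qed.

Lemma bounded (W : Omega1) (I : Type) (e : I -> nat)
  (einj : forall i j, e i = e j -> i = j) (h : I -> W) :
  exists s, forall i, h i <w s.
Proof.
  apply NNPP; intro H.
  assert (Hx : forall s : W, exists i, ~ h i <w s).
  { intro s. apply NNPP; intro H2. apply H. exists s. intro i.
    apply NNPP; intro H3. apply H2. exists i. exact H3. }
  pose (idx := fun s => proj1_sig (constructive_indefinite_description _ (Hx s))).
  assert (Hidx : forall s, ~ h (idx s) <w s).
  { intro s. unfold idx. destruct (constructive_indefinite_description _ (Hx s)); auto. }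
  pose (F := fun i => proj1_sig (constructive_indefinite_description _
                   (o1_segments_countable W (h i)))).
  assert (HF : forall i x y, F i x = F i y -> x = y).
  { intro i. unfold F. destruct (constructive_indefinite_description _ _); auto. }
  pose (tag := fun s => match excluded_middle_informative (s <w h (idx s)) with
                        | left p => S (F (idx s) (exist _ s p)) | right _ => 0 end).
  assert (T0 : forall s, tag s = 0 -> s = h (idx s)).
  { intros s. unfold tag. destruct (excluded_middle_informative _) as [p|p].
    - discriminate.
    - intros _. destruct (olt_total W s (h (idx s))) as [?|[?|?]]; try tauto.
      exfalso; eapply Hidx; eauto. }
  assert (TS : forall s i k, idx s = i -> tag s = S k ->
             exists p : s <w h i, F i (exist _ s p) = k).
  { intros s i k <-. unfold tag. destruct (excluded_middle_informative _) as [p|p].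
    - intros E. injection E; intros; subst. exists p. reflexivity.
    - discriminate. }
  apply (o1_uncountable W). exists (fun s => to_nat (e (idx s), tag s)).
  intros x y Exy.
  apply (f_equal of_nat) in Exy. rewrite !cancel_of_to in Exy.
  injection Exy; intros Et Ei. apply einj in Ei.
  destruct (tag x) as [|k] eqn:Tx.
  - rewrite (T0 x Tx), (T0 y (eq_sym Et)). rewrite Ei. reflexivity.
  - destruct (TS x (idx x) k eq_refl Tx) as [p Hp].
    destruct (TS y (idx x) k (eq_sym Ei) (eq_sym Et)) as [q Hq].
    rewrite <- Hq in Hp. apply HF in Hp. injection Hp; auto.
Qed.

Lemma no_max (W : Omega1) (a : W) : exists b, a <w b.
Proof.
  destruct (bounded W unit (fun _ => 0) (fun i j _ => match i, j with tt, tt => eq_refl end)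
     (fun _ => a)) as [s Hs]. exists s. apply (Hs tt).
Qed.
Lemma osup_exists (W : Omega1) (f : nat -> W) :
  (forall n, f n <w f (S n)) ->
  exists s, (forall n, f n <w s) /\ (forall y, y <w s -> exists n, y <w f n).
Proof.
  intros Hf.
  destruct (bounded W nat (fun n => n) (fun i j H => H) f) as [s0 Hs0].
  destruct (wf_min W (fun s => forall n, f n <w s)) as [s [Hs Hmin]].
  { exists s0; auto. }
  exists s. split; auto.
  intros y Hy. apply NNPP; intro H.
  apply (Hmin y Hy). intro n.
  destruct (olt_total W (f n) y) as [?|[E|?]]; auto.
  - exfalso. apply H. exists (S n). rewrite <- E. auto.
  - exfalso. apply H. exists n. auto.
Qed.

Lemma seq_exists (W : Omega1) (R : W -> W -> Prop) (a0 : W) :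
  (forall a, exists a', a <w a' /\ R a a') ->
  exists f : nat -> W, f 0 = a0 /\ forall n, f n <w f (S n) /\ R (f n) (f (S n)).
Proof.
  intros H.
  pose (g := fun a => proj1_sig (constructive_indefinite_description _ (H a))).
  assert (Hg : forall a, a <w g a /\ R a (g a)).
  { intro a. unfold g. destruct (constructive_indefinite_description _ _); auto. }
  exists (fun n => Nat.iter n g a0). split; [reflexivity|].
  intro n. simpl. apply Hg.
Qed.

Lemma seq_mono (W : Omega1) (f : nat -> W) :
  (forall n, f n <w f (S n)) -> forall n m, n < m -> f n <w f m.
Proof.
  intros Hf n m Hnm. induction Hnm.
  - apply Hf.
  - eapply olt_trans; eauto.
Qed.

Lemma osup_limit (W : Omega1) (f : nat -> W) (s : W) :
  (forall n, f n <w f (S n)) ->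
  (forall n, f n <w s) -> (forall y, y <w s -> exists n, y <w f n) -> is_limit W s.
Proof.
  intros Hf H1 H2. split.
  - exists (f 0). auto.
  - intros b Hb. destruct (H2 b Hb) as [n Hn]. exists (f n). auto.
Qed.

Lemma omega_sup (W : Omega1) (R : W -> W -> Prop) (a0 : W) :
  (forall a, exists a', a <w a' /\ R a a') ->
  exists (f : nat -> W) s, f 0 = a0 /\ (forall n, f n <w f (S n) /\ R (f n) (f (S n)))
   /\ (forall n, f n <w s) /\ (forall y, y <w s -> exists n, y <w f n) /\ is_limit W s.
Proof.
  intros H. destruct (seq_exists W R a0 H) as [f [H0 Hf]].
  destruct (osup_exists W f) as [s [H1 H2]]. { intro n; apply Hf. }
  exists f, s. repeat split; auto; try apply Hf.
  - exists (f 0). auto.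
  - intros b Hb. destruct (H2 b Hb) as [n Hn]. exists (f n). split; auto.
Qed.

Lemma option_bounded (W : Omega1) (x : W) (Q : W -> W -> Prop) :
  (forall a b b', Q a b -> b <w b' -> Q a b') ->
  (forall a, a <w x -> exists b, Q a b) ->
  exists s, x <w s /\ forall a, a <w x -> Q a s.
Proof.
  intros Hup H.
  destruct (o1_segments_countable W x) as [e He].
  assert (H' : forall z : {y | y <w x}, exists b, Q (proj1_sig z) b).
  { intros [y Hy]. apply H; auto. }
  pose (B := fun z => proj1_sig (constructive_indefinite_description _ (H' z))).
  assert (HB : forall z, Q (proj1_sig z) (B z)).
  { intro z. unfold B. destruct (constructive_indefinite_description _ _); auto. }
  destruct (bounded W (option {y | y <w x})
      (fun o => match o with None => 0 | Some z => S (e z) end))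
    with (h := fun o => match o with None => x | Some z => B z end) as [s Hs].
  { intros [i|] [j|]; simpl; intros E; try discriminate; auto.
    injection E; intro E'. apply He in E'. subst; auto. }
  exists s. split. { apply (Hs None). }
  intros a Ha. apply Hup with (B (exist _ a Ha)). { apply (HB (exist _ a Ha)). }
  apply (Hs (Some (exist _ a Ha))).
Qed.
Lemma club_Q (W : Omega1) (Q : W -> W -> Prop) :
  (forall a b b', Q a b -> b <w b' -> Q a b') ->
  (forall a, exists b, Q a b) ->
  club W (fun b => forall a, a <w b -> Q a b).
Proof.
  intros Hup Hex. split.
  - intros x Hx Hc a Ha. destruct (Hc a Ha) as [c [H1 [H2 H3]]]. eauto.
  - intro a.
    destruct (omega_sup W (fun x x' => forall y, y <w x -> Q y x') a) as
        [f [s [H0 [Hf [H1 [H2 _]]]]]].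
    { intro x. destruct (option_bounded W x Q Hup) as [s [Hs1 Hs2]].
      { intros; apply Hex. } exists s; auto. }
    exists s. split. { rewrite <- H0. auto. }
    intros y Hy. destruct (H2 y Hy) as [n Hn].
    apply Hup with (f (S n)); auto. apply Hf; auto.
Qed.

Lemma limits_club (W : Omega1) : club W (is_limit W).
Proof.
  split.
  - intros a Ha _. exact Ha.
  - intro a. destruct (omega_sup W (fun _ _ => True) a) as [f [s [H0 [_ [H1 [_ H3]]]]]].
    { intro x. destruct (no_max W x) as [b Hb]. eauto. }
    exists s. rewrite <- H0. auto.
Qed.

Lemma countable_inter_club (W : Omega1) (C : nat -> W -> Prop) :
  (forall n, club W (C n)) -> club W (fun x => forall n, C n x).
Proof.
  intros HC. split.
  - intros a Ha Hc n. apply (proj1 (HC n)); auto.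
    intros b Hb. destruct (Hc b Hb) as [c [? [? ?]]]; eauto.
  - intro a.
    destruct (omega_sup W (fun x x' => forall n, exists y, C n y /\ x <w y /\ y <w x') a) as
        [f [s [H0 [Hf [H1 [H2 Hl]]]]]].
    { intro x.
      assert (HY : forall n, exists y, x <w y /\ C n y) by (intro n; apply (proj2 (HC n))).
      pose (Y := fun n => proj1_sig (constructive_indefinite_description _ (HY n))).
      assert (HY' : forall n, x <w Y n /\ C n (Y n)).
      { intro n. unfold Y. destruct (constructive_indefinite_description _ _); auto. }
      destruct (bounded W nat (fun n => n) (fun i j H => H) Y) as [s Hs].
      exists s. split.
      - eapply olt_trans; [apply (HY' 0)|apply Hs].
      - intro n. exists (Y n). split; [apply HY'|split; [apply HY'|apply Hs]]. }
    exists s. split. { rewrite <- H0. auto. }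
    intro n. apply (proj1 (HC n)); auto.
    intros b Hb. destruct (H2 b Hb) as [k Hk].
    destruct (proj2 (Hf k) n) as [y [Hy1 [Hy2 Hy3]]].
    exists y. repeat split; eauto using olt_trans.
Qed.

Lemma inter2_club (W : Omega1) (C1 C2 : W -> Prop) :
  club W C1 -> club W C2 -> club W (fun x => C1 x /\ C2 x).
Proof.
  intros H1 H2.
  destruct (countable_inter_club W (fun n => match n with 0 => C1 | _ => C2 end)) as [Hc Hu].
  { intros [|n]; auto. }
  split.
  - intros a Ha Hcof. cut (forall n, match n with 0 => C1 | _ => C2 end a).
    { intro H; exact (conj (H 0) (H 1)). }
    apply Hc; auto.
    intros b Hb. destruct (Hcof b Hb) as [c [? [? [? ?]]]]. exists c.
    repeat split; auto. intros [|n]; auto.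
  - intros a. destruct (Hu a) as [b [? Hb]]. exists b. split; auto. split; [apply (Hb 0)|apply (Hb 1)].
Qed.

Lemma diag_club (W : Omega1) (C : W -> W -> Prop) :
  (forall b, club W (C b)) -> club W (fun x => forall b, b <w x -> C b x).
Proof.
  intros HC. split.
  - intros a Ha Hc b Hb. apply (proj1 (HC b)); auto.
    intros y Hy.
    destruct (olt_total W y b) as [Hyb|[Hyb|Hyb]].
    + destruct (Hc b Hb) as [c [Hc1 [Hc2 Hc3]]]. exists c. repeat split; eauto using olt_trans.
    + rewrite Hyb. destruct (Hc b Hb) as [c [Hc1 [Hc2 Hc3]]]. exists c. repeat split; auto.
    + destruct (Hc y Hy) as [c [Hc1 [Hc2 Hc3]]]. exists c. repeat split; eauto using olt_trans.
  - intro a.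
    destruct (omega_sup W (fun x x' => forall b, b <w x -> exists y, C b y /\ x <w y /\ y <w x') a) as
        [f [s [H0 [Hf [H1 [H2 Hl]]]]]].
    { intro x.
      assert (HY : forall b, exists y, x <w y /\ C b y) by (intro b; apply (proj2 (HC b))).
      pose (Y := fun b => proj1_sig (constructive_indefinite_description _ (HY b))).
      assert (HY' : forall b, x <w Y b /\ C b (Y b)).
      { intro b. unfold Y. destruct (constructive_indefinite_description _ _); auto. }
      destruct (option_bounded W x (fun b s => Y b <w s)) as [s [Hs1 Hs2]].
      { intros; eauto using olt_trans. }
      { intros b _. destruct (no_max W (Y b)); eauto. }
      exists s. split; auto.
      intros b Hb. exists (Y b). split; [apply HY'|split; [apply HY'|auto]]. }
    exists s. split. { rewrite <- H0. auto. }
    intros b Hb. apply (proj1 (HC b)); auto.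
    destruct (H2 b Hb) as [k Hk].
    intros y Hy. destruct (H2 y Hy) as [j Hj].
    pose (m := Nat.max j k).
    assert (Hmono : forall i, i <= m -> forall z, z <w f i -> z <w f m).
    { intros i Hi z Hz. destruct (Nat.eq_dec i m) as [->|Hne]; auto.
      eapply olt_trans; [exact Hz|]. apply seq_mono; [intro; apply Hf|lia]. }
    destruct (proj2 (Hf m) b) as [z [Hz1 [Hz2 Hz3]]].
    { apply (Hmono k); [lia|auto]. }
    exists z. repeat split; auto.
    + eapply olt_trans; [|exact Hz2]. apply (Hmono j); [lia|auto].
    + eapply olt_trans; [exact Hz3|apply H1].
Qed.

Lemma stat_inter_club (W : Omega1) (S C : W -> Prop) :
  stationary W S -> club W C -> stationary W (fun x => S x /\ C x).
Proof.
  intros HS HC D HD. destruct (HS (fun x => D x /\ C x)) as [a [[? ?] ?]].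
  { apply inter2_club; auto. }
  exists a; auto.
Qed.

Lemma fodor (W : Omega1) (S : W -> Prop) (P : W -> W -> Prop) :
  stationary W S -> (forall a, S a -> exists b, b <w a /\ P b a) ->
  exists b, stationary W (fun a => S a /\ P b a).
Proof.
  intros HS HP. apply NNPP; intro H.
  assert (HC : forall b, exists C, club W C /\ forall a, C a -> ~ (S a /\ P b a)).
  { intro b. apply NNPP; intro H2. apply H. exists b. intros C HC.
    apply NNPP; intro H3. apply H2. exists C. split; auto.
    intros a Ca Ha. apply H3. exists a. auto. }
  pose (C := fun b => proj1_sig (constructive_indefinite_description _ (HC b))).
  assert (HC' : forall b, club W (C b) /\ forall a, C b a -> ~ (S a /\ P b a)).
  { intro b. unfold C. destruct (constructive_indefinite_description _ _); auto. }
  destruct (HS _ (diag_club W C (fun b => proj1 (HC' b)))) as [a [Ha1 Ha2]].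
  destruct (HP a Ha2) as [b [Hb1 Hb2]].
  apply (proj2 (HC' b) a); auto.
Qed.

Lemma fiber (W : Omega1) (S : W -> Prop) (P : nat -> W -> Prop) :
  stationary W S -> (forall a, S a -> exists n, P n a) ->
  exists n, stationary W (fun a => S a /\ P n a).
Proof.
  intros HS HP. apply NNPP; intro H.
  assert (HC : forall n, exists C, club W C /\ forall a, C a -> ~ (S a /\ P n a)).
  { intro n. apply NNPP; intro H2. apply H. exists n. intros C HC.
    apply NNPP; intro H3. apply H2. exists C. split; auto.
    intros a Ca Ha. apply H3. exists a. auto. }
  pose (C := fun n => proj1_sig (constructive_indefinite_description _ (HC n))).
  assert (HC' : forall n, club W (C n) /\ forall a, C n a -> ~ (S a /\ P n a)).
  { intro n. unfold C. destruct (constructive_indefinite_description _ _); auto. }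
  destruct (HS _ (countable_inter_club W C (fun n => proj1 (HC' n)))) as [a [Ha1 Ha2]].
  destruct (HP a Ha2) as [n Hn].
  apply (proj2 (HC' n) a); auto.
Qed.
Lemma list_of_bounded (T : Type) (Q : T -> Prop) (s : list T) :
  (forall z, Q z -> In z s) -> exists L, forall z, In z L <-> Q z.
Proof.
  revert Q. induction s as [|a s IH]; intros Q H.
  - exists nil. simpl. split; [tauto|]. intro Hq. exact (H z Hq).
  - destruct (IH (fun z => Q z /\ z <> a)) as [L HL].
    { intros z [Hz Hne]. destruct (H z Hz); [congruence|auto]. }
    destruct (classic (Q a)) as [Qa|Qa].
    + exists (a :: L). intro z. simpl. rewrite HL. split.
      * intros [<-|[? ?]]; auto.
      * intro Hz. destruct (classic (z = a)); auto.
    + exists L. intro z. rewrite HL. split; [tauto|].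
      intro Hz. split; auto. intros ->. auto.
Qed.

Lemma limit_list_bound (W : Omega1) (a : W) (L : list W) :
  is_limit W a -> (forall y, In y L -> y <w a) ->
  exists b, b <w a /\ forall y, In y L -> y <w b.
Proof.
  intros Ha. induction L as [|y L IH]; intros H.
  - destruct (proj1 Ha) as [b Hb]. exists b. simpl; split; tauto.
  - destruct IH as [b [Hb1 Hb2]]. { intros; apply H; simpl; auto. }
    destruct (proj2 Ha y (H y (or_introl eq_refl))) as [c [Hc1 Hc2]].
    destruct (olt_total W b c) as [Hbc|[Hbc|Hbc]].
    + exists c. split; auto. intros z [<-|Hz]; eauto using olt_trans.
    + exists c. split; auto. intros z [<-|Hz]; auto. rewrite <- Hbc; auto.
    + exists b. split; auto. intros z [<-|Hz]; eauto using olt_trans.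
Qed.

Lemma list_bound (W : Omega1) (L : list W) (x0 : W) :
  exists b, x0 <w b /\ forall y, In y L -> y <w b.
Proof.
  induction L as [|y L IH].
  - destruct (no_max W x0) as [b Hb]. exists b. simpl; split; tauto.
  - destruct IH as [b [Hb1 Hb2]].
    destruct (olt_total W y b) as [Hyb|[Hyb|Hyb]].
    + exists b. split; auto. intros z [<-|Hz]; auto.
    + destruct (no_max W y) as [b' Hb']. exists b'. rewrite <- Hyb in *.
      split; [eauto using olt_trans|]. intros z [<-|Hz]; eauto using olt_trans.
    + destruct (no_max W y) as [b' Hb']. exists b'.
      split; [eauto using olt_trans|]. intros z [<-|Hz]; eauto using olt_trans.
Qed.

Fixpoint code_list (L : list (nat * nat)) : nat :=
  match L with nil => 0 | x :: L' => S (to_nat (to_nat x, code_list L')) end.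

Lemma code_list_inj L M : code_list L = code_list M -> L = M.
Proof.
  revert M. induction L as [|x L IH]; intros [|y M]; cbn [code_list]; try discriminate; auto.
  intro E. pose proof (eq_add_S _ _ E) as E'. apply (f_equal of_nat) in E'.
  rewrite !cancel_of_to in E'. injection E'; intros E2 E1.
  apply (f_equal of_nat) in E1. rewrite !cancel_of_to in E1. subst.
  rewrite (IH M E2). reflexivity.
Qed.

Lemma map_inj_on (A B : Type) (f : A -> B) (P : A -> Prop) :
  (forall x y, P x -> P y -> f x = f y -> x = y) ->
  forall L M, (forall x, In x L -> P x) -> (forall x, In x M -> P x) ->
  map f L = map f M -> L = M.
Proof.
  intros Hf. induction L as [|x L IH]; intros [|y M] HL HM; simpl; try discriminate; auto.
  intro E. injection E; intros E2 E1.
  rewrite (Hf x y), (IH M); simpl in *; auto.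
Qed.
Definition repr (W : Omega1) (l : W -> nat -> W) (c : W -> nat -> nat) (p : cond W)
  (a : W) (L1 L2 : list (W * nat)) : Prop :=
  (forall g k, In (g, k) L1 <-> p g = Some k /\ g <w a) /\
  (forall x k, In (x, k) L2 <-> exists g j m, p g = Some j /\ j <= m /\ a <w g /\
       l g m = x /\ x <w a /\ c g m = k).

Lemma irr_lt (W : Omega1) (x y : W) : x <w y -> y <w x -> False.
Proof. intros H1 H2. exact (olt_irrefl W x (olt_trans W _ _ _ H1 H2)). Qed.

Lemma rep_exists (W : Omega1) l c E p a :
  ladder_system W l -> in_PE W E l c p -> exists L1 L2, repr W l c p a L1 L2.
Proof.
  intros Hl [[s Hs] [Hdom Hcol]].
  destruct (list_of_bounded _ (fun z => p (fst z) = Some (snd z) /\ fst z <w a)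
     (map (fun g => (g, match p g with Some k => k | None => 0 end)) s)) as [L1 HL1].
  { intros [g k] [H1 H2]. simpl in *.
    assert (In g s) by (apply Hs; congruence).
    replace k with (match p g with Some k => k | None => 0 end) by (rewrite H1; auto).
    apply (in_map (fun g => (g, match p g with Some k => k | None => 0 end))); auto. }
  assert (Hcov : exists M, forall g j m, In g s -> p g = Some j -> a <w g -> l g m <w a ->
                  In (l g m, c g m) M).
  { clear HL1 Hs. induction s as [|g s IH].
    - exists nil. intros ? ? ? [].
    - destruct IH as [M HM].
      destruct (classic (exists j, p g = Some j /\ a <w g)) as [[j [Hj Hag]]|Hno].
      + destruct (Hdom g j Hj) as [_ Hlim].
        destruct (Hl g Hlim) as [_ [Hinc Hcof]].
        destruct (Hcof a Hag) as [n Hn].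
        exists (map (fun m => (l g m, c g m)) (seq 0 n) ++ M).
        intros g' j' m [<-|Hin] Hj' Hag' Hlt.
        * apply in_or_app; left. apply (in_map (fun m => (l g m, c g m))).
          apply in_seq. split; [lia|]. simpl.
          destruct (Nat.lt_ge_cases m n) as [?|Hmn]; auto.
          exfalso. destruct (Nat.eq_dec n m) as [<-|Hne].
          -- exact (irr_lt W _ _ Hn Hlt).
          -- apply (irr_lt W _ _ Hn). apply (olt_trans W _ (l g m)); [apply Hinc; lia|exact Hlt].
        * apply in_or_app; right. eauto.
      + exists M. intros g' j' m [<-|Hin] Hj' Hag' Hlt; eauto.
        exfalso. apply Hno; eauto. }
  destruct Hcov as [M HM].
  destruct (list_of_bounded _ (fun z => exists g j m, p g = Some j /\ j <= m /\ a <w g /\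
       l g m = fst z /\ fst z <w a /\ c g m = snd z) M) as [L2 HL2].
  { intros [x k] [g [j [m [H1 [H2 [H3 [H4 [H5 H6]]]]]]]]. simpl in *. subst.
    apply (HM g j); auto. apply Hs. congruence. }
  exists L1, L2. split.
  - intros g k. apply (HL1 (g, k)).
  - intros x k. apply (HL2 (x, k)).
Qed.
Definition qfold (W : Omega1) (s : list (cond W)) (g : W) : option nat :=
  fold_right (fun p acc => match p g with Some k => Some k | None => acc end) None s.

Lemma fold_some (W : Omega1) (s : list (cond W)) g k :
  qfold W s g = Some k -> exists p, In p s /\ p g = Some k.
Proof.
  induction s as [|p s IH]; simpl; [discriminate|].
  destruct (p g) eqn:Hp.
  - intro H. exists p. split; auto; congruence.
  - intro H. destruct (IH H) as [p' [? ?]]. exists p'; auto.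
Qed.

Lemma fold_ext (W : Omega1) (s : list (cond W)) :
  (forall p p' g k k', In p s -> In p' s -> p g = Some k -> p' g = Some k' -> k = k') ->
  forall p g k, In p s -> p g = Some k -> qfold W s g = Some k.
Proof.
  induction s as [|p0 s IH]; intros Hag p g k Hin Hp; simpl in *; [contradiction|].
  destruct (p0 g) eqn:Hp0.
  - f_equal. destruct Hin as [<-|Hin]; [congruence|]. apply (Hag p0 p g n k); auto.
  - destruct Hin as [<-|Hin]; [congruence|]. eapply IH; eauto.
Qed.

Lemma dom_list (W : Omega1) (E : W -> Prop) l c (s : list (cond W)) :
  (forall p, In p s -> in_PE W E l c p) ->
  exists D, forall p g, In p s -> p g <> None -> In g D.
Proof.
  induction s as [|p s IH]; intros H.
  - exists nil. intros ? ? [].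
  - destruct IH as [D HD]. { intros; apply H; simpl; auto. }
    destruct (H p (or_introl eq_refl)) as [[s0 Hs0] _].
    exists (s0 ++ D). intros p' g [<-|Hin] Hg; apply in_or_app; eauto.
Qed.

Theorem lemma3 (W : Omega1) (l : W -> nat -> W) (c : W -> nat -> nat)
  (E : W -> Prop) :
  ladder_system W l ->
  stationary W E -> stationary W (fun a => ~ E a) ->
  stat_pc W (fun a => ~ E a) E l c.
Proof.
  intros Hl HE HnE S ps [HS HSn] Hps.
  pose (Q := fun a b => S a -> forall g k, ps a g = Some k -> g <w b).
  assert (HQclub : club W (fun b => forall a, a <w b -> Q a b)).
  { apply club_Q.
    - intros a b b' H Hbb' Sa g k Hg. eapply olt_trans; [eapply H; eauto|auto].
    - intro a. destruct (classic (S a)) as [Sa|Sa].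
      + destruct (Hps a Sa) as [[s Hs] _]. destruct (list_bound W s a) as [b [_ Hb]].
        exists b. intros _ g k Hg. apply Hb, Hs. congruence.
      + exists a. intro; contradiction. }
  pose (S1 := fun a => S a /\ (is_limit W a /\ forall a', a' <w a -> Q a' a)).
  assert (HS1 : stationary W S1).
  { apply stat_inter_club; auto. apply inter2_club; auto using limits_club. }
  pose (P1 := fun b a => exists L1 L2, repr W l c (ps a) a L1 L2 /\
     (forall y k, In (y,k) L1 -> y <w b) /\ (forall y k, In (y,k) L2 -> y <w b)).
  destruct (fodor W S1 P1 HS1) as [b0 HS2].
  { intros a [Sa [Lim _]].
    destruct (rep_exists W l c E (ps a) a Hl (Hps a Sa)) as [L1 [L2 HR]].
    destruct (limit_list_bound W a (map fst L1 ++ map fst L2) Lim) as [b [Hb1 Hb2]].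
    { intros y Hy. apply in_app_or in Hy.
      destruct Hy as [Hy|Hy]; apply in_map_iff in Hy; destruct Hy as [[y' k] [Hy' Hy]];
        simpl in Hy'; subst y'.
      - apply (proj1 HR) in Hy. tauto.
      - apply (proj2 HR) in Hy. destruct Hy as [? [? [? [? [? [? [? [? ?]]]]]]]]; auto. }
    exists b. split; auto. exists L1, L2. split; auto.
    split; intros y k Hy; apply Hb2; apply in_or_app; [left|right];
      apply (in_map fst _ (y,k)); auto. }
  destruct (o1_segments_countable W b0) as [F HF].
  pose (e := fun y => match excluded_middle_informative (y <w b0) with
                      | left p => F (exist _ y p) | right _ => 0 end).
  assert (He : forall y z, y <w b0 -> z <w b0 -> e y = e z -> y = z).
  { intros y z Hy Hz. unfold e.
    destruct (excluded_middle_informative (y <w b0)); [|contradiction].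
    destruct (excluded_middle_informative (z <w b0)); [|contradiction].
    intro H. apply HF in H. injection H; auto. }
  pose (enc := fun L : list (W * nat) => code_list (map (fun z => (e (fst z), snd z)) L)).
  assert (Henc : forall L M, (forall y k, In (y,k) L -> y <w b0) ->
            (forall y k, In (y,k) M -> y <w b0) -> enc L = enc M -> L = M).
  { intros L M HL HM H. apply code_list_inj in H.
    apply (map_inj_on _ _ _ (fun z => fst z <w b0)) in H; auto.
    - intros [y k] [y' k'] Hy Hy' Heq. simpl in *. injection Heq; intros E2 E1.
      f_equal; auto.
    - intros [y k] Hin; simpl; eauto.
    - intros [y k] Hin; simpl; eauto. }
  pose (P2 := fun n a => exists L1 L2, repr W l c (ps a) a L1 L2 /\
     (forall y k, In (y,k) L1 -> y <w b0) /\ (forall y k, In (y,k) L2 -> y <w b0) /\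
     to_nat (enc L1, enc L2) = n).
  destruct (fiber W _ P2 HS2) as [n0 HS3].
  { intros a [_ [L1 [L2 [H1 [H2 H3]]]]]. exists (to_nat (enc L1, enc L2)).
    exists L1, L2. auto. }
  set (S3 := fun a => (S1 a /\ P1 b0 a) /\ P2 n0 a) in HS3.
  assert (Hsame : forall a b, S3 a -> S3 b -> exists L1 L2,
            repr W l c (ps a) a L1 L2 /\ repr W l c (ps b) b L1 L2).
  { intros a b [_ [L1 [L2 [Ha1 [Ha2 [Ha3 Ha4]]]]]] [_ [M1 [M2 [Hb1 [Hb2 [Hb3 Hb4]]]]]].
    rewrite <- Hb4 in Ha4. apply (f_equal of_nat) in Ha4. rewrite !cancel_of_to in Ha4.
    injection Ha4; intros E2 E1.
    apply Henc in E1; auto. apply Henc in E2; auto. subst. eauto. }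
  assert (Hlt : forall a b, S3 a -> S3 b -> a <w b ->
     (forall g k k', ps a g = Some k -> ps b g = Some k' -> k = k') /\
     (forall x y kx ky m n, ps a x = Some kx -> ps b y = Some ky -> kx <= m -> ky <= n ->
        l x m = l y n -> c x m = c y n)).
  { intros a b Ha Hb Hab. destruct (Hsame a b Ha Hb) as [L1 [L2 [Ra Rb]]].
    destruct Ha as [[[Sa [La Ca]] _] _]. destruct Hb as [[[Sb [Lb Cb]] _] _].
    assert (Hqa := Cb a Hab Sa).
    split.
    - intros g k k' H1 H2. assert (H : In (g,k') L1) by (apply (proj1 Rb); split; eauto).
      apply (proj1 Ra) in H. destruct H as [H _]. congruence.
    - intros x y kx ky m n H1 H2 Hm Hn Heq.
      destruct (Hps a Sa) as [_ [Hda Hca]]. destruct (Hps b Sb) as [_ [Hdb Hcb]].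
      destruct (olt_total W y b) as [Hyb|[Hyb|Hyb]].
      + assert (H : In (y,ky) L1) by (apply (proj1 Rb); auto).
        apply (proj1 Ra) in H. destruct H as [H _]. eapply Hca; eauto.
      + subst y. exfalso. apply (HSn b Sb). apply (Hdb b ky H2).
      + assert (Hx : l x m <w b).
        { destruct (Hda x kx H1) as [_ Lx]. destruct (Hl x Lx) as [Hlx _].
          eapply olt_trans; [apply Hlx|]. eapply Hqa; eauto. }
        assert (H : In (l y n, c y n) L2).
        { apply (proj2 Rb). exists y, ky, n. rewrite <- Heq.
          repeat split; auto. }
        apply (proj2 Ra) in H. destruct H as [g [j [m' [G1 [G2 [G3 [G4 [G5 G6]]]]]]]].
        rewrite <- G6. eapply Hca; eauto. rewrite G4; auto. }
  assert (Hcomp : forall a b, S3 a -> S3 b ->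
     (forall g k k', ps a g = Some k -> ps b g = Some k' -> k = k') /\
     (forall x y kx ky m n, ps a x = Some kx -> ps b y = Some ky -> kx <= m -> ky <= n ->
        l x m = l y n -> c x m = c y n)).
  { intros a b Ha Hb. destruct (olt_total W a b) as [H|[H|H]].
    - apply Hlt; auto.
    - subst b. destruct Ha as [[[Sa _] _] _]. destruct (Hps a Sa) as [_ [_ Hca]].
      split; [intros; congruence|eauto].
    - destruct (Hlt b a Hb Ha H) as [H1 H2].
      split; [intros; symmetry; eauto|intros; symmetry; eapply H2; eauto]. }
  exists S3. split.
  { split; auto. intros a [[[Sa _] _] _]; auto. }
  intros s Hs. exists (qfold W s).
  assert (HPE : forall p, In p s -> in_PE W E l c p).
  { intros p Hin. destruct (Hs p Hin) as [a [[[[Sa _] _] _] ->]]. auto. }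
  split.
  - split; [|split].
    + destruct (dom_list W E l c s HPE) as [D HD]. exists D. intros g Hg.
      destruct (qfold W s g) eqn:Hq; [|congruence].
      destruct (fold_some W s g n Hq) as [p [Hin Hp]]. eapply HD; eauto. congruence.
    + intros g k Hq. destruct (fold_some W s g k Hq) as [p [Hin Hp]].
      destruct (HPE p Hin) as [_ [H _]]. eauto.
    + intros x y kx ky m n Hx Hy Hm Hn Heq.
      destruct (fold_some W s x kx Hx) as [p [Hin Hp]].
      destruct (fold_some W s y ky Hy) as [p' [Hin' Hp']].
      destruct (Hs p Hin) as [a [Ha ->]]. destruct (Hs p' Hin') as [b [Hb ->]].
      eapply (proj2 (Hcomp a b Ha Hb)); eauto.
  - intros p Hin g k Hg. apply fold_ext with p; auto.
    intros p1 p2 g' k1 k2 Hin1 Hin2 H1 H2.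
    destruct (Hs p1 Hin1) as [a [Ha ->]]. destruct (Hs p2 Hin2) as [b [Hb ->]].
    eapply (proj1 (Hcomp a b Ha Hb)); eauto.
Qed.
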